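(* Let $v=(x,y)\in T$ be a point with at least one irrational coordinate. Then $G^k(v)\neq(0,0)$ for all $k\ge0$, so its itinerary is defined, and: the itinerary of $v$ consists only of symbols of type $\mathbb{A}$ if and only if $y = 0$. Moreover, if the itinerary is $\mathbb{A}_{a_1},\mathbb{A}_{a_2},\dots$, then $x = [0;a_1,a_2,\dots]$ (regular continued fraction).
   Context: Let $T = \{(x,y)\in\mathbb{R}^2 : 0 \le y \le x \le 1\}$. For integers $n\ge1$ define $\mathbb{A}_n = \{(x,y) : \frac{1}{n+1} < x \le \frac1n,\ 0 \le y \le 1-nx\}$ and $\mathbb{B}_n = \{(x,y) : 1-nx < y \le x \le \frac1n\}$; these together with $\{(0,0)\}$ partition $T$. The 2-dimensional Gauss map $G:T\to T$ is $G(0,0)=(0,0)$, $G(x,y)=\left(\frac1x-n,\frac yx\right)$ on $\mathbb{A}_n$, $G(x,y)=\left(\frac{1-y}{x}-n+1,\frac{x-y}{x}\right)$ on $\mathbb{B}_n$. For a point $v$ whose forward orbit never hits $(0,0)$, its itinerary is the sequence of symbols $\mathbb{X}_{a_1},\mathbb{X}_{a_2},\dots$ ($\mathbb{X}\in\{\mathbb{A},\mathbb{B}\}$, $a_k\ge1$) with $G^{k-1}(v)\in\mathbb{X}_{a_k}$ for all $k\ge1$. *)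

(* Defs.v *)
From Stdlib Require Import Reals Lra Lia ZArith.
Open Scope R_scope.

Definition inT (p : R * R) : Prop :=
  0 <= snd p /\ snd p <= fst p /\ fst p <= 1.

Definition inA (n : nat) (p : R * R) : Prop :=
  / (INR n + 1) < fst p /\ fst p <= / INR n /\
  0 <= snd p /\ snd p <= 1 - INR n * fst p.

Definition inB (n : nat) (p : R * R) : Prop :=
  1 - INR n * fst p < snd p /\ snd p <= fst p /\ fst p <= / INR n.

(* The index n = floor(1/x) of the strip 1/(n+1) < x <= 1/n (for 0 < x <= 1). *)
Definition strip (x : R) : nat := Z.to_nat (up (/ x) - 1).

Definition G (p : R * R) : R * R :=
  let (x, y) := p in
  if Req_EM_T x 0 then (0, 0) else
  let n := INR (strip x) in
  if Rle_dec y (1 - n * x) then (/ x - n, y / x)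
  else ((1 - y) / x - n + 1, (x - y) / x).

Fixpoint Giter (k : nat) (p : R * R) : R * R :=
  match k with
  | O => p
  | S k' => G (Giter k' p)
  end.

Inductive symbol : Type := SymA (n : nat) | SymB (n : nat).

Definition in_symbol (s : symbol) (p : R * R) : Prop :=
  match s with
  | SymA n => (1 <= n)%nat /\ inA n p
  | SymB n => (1 <= n)%nat /\ inB n p
  end.

Definition is_A (s : symbol) : Prop :=
  match s with SymA _ => True | SymB _ => False end.

(* s is the itinerary of v: s k is the symbol X_{a_{k+1}} with G^k(v) in it. *)
Definition is_itinerary (v : R * R) (s : nat -> symbol) : Prop :=
  forall k : nat, in_symbol (s k) (Giter k v).

Definition rational (r : R) : Prop :=
  exists p q : Z, q <> 0%Z /\ r = IZR p / IZR q.

(* Finite continued fraction [0; a 0, a 1, ..., a (n-1)]. *)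
Fixpoint cf_fin (n : nat) (a : nat -> nat) : R :=
  match n with
  | O => 0
  | S n' => / (INR (a O) + cf_fin n' (fun k => a (S k)))
  end.

Definition cf_value (a : nat -> nat) (x : R) : Prop :=
  Un_cv (fun n => cf_fin n a) x.

(* Main.v *)
Require Import Defs.
From Stdlib Require Import Reals Lra Lia ZArith.
Open Scope R_scope.

Lemma INR_pos1 (m:nat) : (1 <= m)%nat -> 1 <= INR m.
Proof. intro H. apply (le_INR 1 m) in H. simpl in H. lra. Qed.

Lemma strip_unique (m : nat) (x : R) : (1 <= m)%nat -> / (INR m + 1) < x -> x <= / INR m -> strip x = m.
Proof.
  intros Hm H1 H2.
  assert (Hm1 := INR_pos1 m Hm).
  assert (Hx : 0 < x). { assert (0 < /(INR m + 1)) by (apply Rinv_0_lt_compat; lra). lra. }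
  assert (Ha : INR m <= / x).
  { replace (INR m) with (/ / INR m) by (apply Rinv_inv).
    apply Rinv_le_contravar; auto. }
  assert (Hb : / x < INR m + 1).
  { replace (INR m + 1) with (/ / (INR m + 1)) by (apply Rinv_inv).
    apply Rinv_lt_contravar; auto.
    apply Rmult_lt_0_compat; auto. apply Rinv_0_lt_compat; lra. }
  assert (Hup : (Z.of_nat m + 1)%Z = up (/ x)).
  { apply tech_up; rewrite plus_IZR, <- INR_IZR_INZ; simpl; lra. }
  unfold strip. rewrite <- Hup.
  replace (Z.of_nat m + 1 - 1)%Z with (Z.of_nat m) by ring. apply Nat2Z.id.
Qed.

Lemma strip_spec (x : R) : 0 < x <= 1 ->
  (1 <= strip x)%nat /\ INR (strip x) <= / x /\ / x < INR (strip x) + 1 /\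
  / (INR (strip x) + 1) < x /\ x <= / INR (strip x).
Proof.
  intros [H0 H1].
  destruct (archimed (/x)) as [A1 A2].
  assert (Hi : 1 <= / x).
  { rewrite <- Rinv_1. apply Rinv_le_contravar; lra. }
  assert (Hz : (1 < up (/x))%Z). { apply lt_IZR. simpl. lra. }
  assert (HI : INR (strip x) = IZR (up (/x)) - 1).
  { unfold strip. rewrite INR_IZR_INZ, Z2Nat.id by lia.
    rewrite minus_IZR. reflexivity. }
  assert (Hs : (1 <= strip x)%nat). { unfold strip. lia. }
  assert (Hm1 := INR_pos1 _ Hs).
  rewrite HI in *.
  repeat split; try lra; try exact Hs.
  - assert (K : / (IZR (up (/ x)) - 1 + 1) < / / x).
    { apply Rinv_lt_contravar; try lra. apply Rmult_lt_0_compat; lra. }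
    rewrite Rinv_inv in K. exact K.
  - assert (K : / / x <= / (IZR (up (/ x)) - 1)).
    { apply Rinv_le_contravar; lra. }
    rewrite Rinv_inv in K. exact K.
Qed.

Lemma G_A x y : x <> 0 -> y <= 1 - INR (strip x) * x ->
  G (x,y) = (/x - INR (strip x), y / x).
Proof.
  intros H1 H2. unfold G. cbv zeta.
  destruct (Req_EM_T x 0); [contradiction|].
  destruct (Rle_dec _ _); [reflexivity| contradiction].
Qed.

Lemma G_B x y : x <> 0 -> ~ y <= 1 - INR (strip x) * x ->
  G (x,y) = ((1 - y) / x - INR (strip x) + 1, (x - y) / x).
Proof.
  intros H1 H2. unfold G. cbv zeta.
  destruct (Req_EM_T x 0); [contradiction|].
  destruct (Rle_dec _ _); [contradiction| reflexivity].
Qed.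

Lemma rat_IZR z : rational (IZR z).
Proof. exists z, 1%Z. split; [lia|]. change (IZR 1) with 1. field. Qed.

Lemma rat_INR n : rational (INR n).
Proof. rewrite INR_IZR_INZ. apply rat_IZR. Qed.

Lemma rat_add a b : rational a -> rational b -> rational (a + b).
Proof.
  intros [p1 [q1 [Hq1 E1]]] [p2 [q2 [Hq2 E2]]].
  exists (p1*q2+p2*q1)%Z, (q1*q2)%Z. split.
  - intro H; apply Z.mul_eq_0 in H; tauto.
  - subst. rewrite plus_IZR, !mult_IZR. field.
    split; apply not_0_IZR; auto.
Qed.

Lemma rat_mul a b : rational a -> rational b -> rational (a * b).
Proof.
  intros [p1 [q1 [Hq1 E1]]] [p2 [q2 [Hq2 E2]]].
  exists (p1*p2)%Z, (q1*q2)%Z. split.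
  - intro H; apply Z.mul_eq_0 in H; tauto.
  - subst. rewrite !mult_IZR. field.
    split; apply not_0_IZR; auto.
Qed.

Lemma rat_opp a : rational a -> rational (- a).
Proof.
  intros [p1 [q1 [Hq1 E1]]]. exists (- p1)%Z, q1. split; auto.
  subst. rewrite opp_IZR. field. apply not_0_IZR; auto.
Qed.

Lemma rat_inv a : a <> 0 -> rational a -> rational (/ a).
Proof.
  intros Ha [p1 [q1 [Hq1 E1]]].
  assert (Hp : p1 <> 0%Z). { intro; subst. apply Ha. unfold Rdiv; ring. }
  exists q1, p1. split; auto. subst. field.
  split; apply not_0_IZR; auto.
Qed.

Lemma rat_0 : rational 0.
Proof. apply (rat_IZR 0). Qed.
Lemma rat_1 : rational 1.
Proof. apply (rat_IZR 1). Qed.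

Definition Good (p : R * R) : Prop :=
  inT p /\ ~ (rational (fst p) /\ rational (snd p)).

Lemma Good_pos p : Good p -> 0 < fst p /\ fst p <= 1.
Proof.
  destruct p as [x y]. intros [[H1 [H2 H3]] H4]. simpl in *.
  split; auto. destruct (Req_dec x 0) as [E|E].
  - exfalso. apply H4. assert (y = 0) by lra. subst. split; apply rat_0.
  - lra.
Qed.

Lemma Good_G p : Good p -> Good (G p).
Proof.
  intro HG. destruct (Good_pos p HG) as [Hx0 Hx1].
  destruct p as [x y]. destruct HG as [[H1 [H2 H3]] H4]. simpl in H1, H2, H3, H4, Hx0, Hx1.
  destruct (strip_spec x (conj Hx0 Hx1)) as [Hs [S1 [S2 [S3 S4]]]].
  set (n := strip x) in *.
  assert (Hu : x * / x = 1) by (field; lra).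
  assert (Hup : 0 < / x) by (apply Rinv_0_lt_compat; lra).
  destruct (Rle_dec y (1 - INR n * x)) as [HA|HB].
  - rewrite G_A by (auto; lra). fold n. split.
    + unfold inT; simpl. unfold Rdiv. repeat split; try nra.
    + simpl. intros [R1 R2]. apply H4.
      assert (Rx : rational (/ x)).
      { replace (/x) with ((/x - INR n) + INR n) by ring.
        apply rat_add; auto. apply rat_INR. }
      assert (Rx' : rational x).
      { rewrite <- (Rinv_inv x). apply rat_inv; auto. apply Rinv_neq_0_compat; lra. }
      split; auto. replace y with (y / x * x) by (field; lra). apply rat_mul; auto.
  - rewrite G_B by (auto; lra). fold n. split.
    + unfold inT; simpl. unfold Rdiv. repeat split; try nra.
    + simpl. intros [R1 R2]. apply H4.
      assert (Ryx : rational (y / x)).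
      { replace (y/x) with (1 + - ((x - y) / x)) by (field; lra).
        apply rat_add; [apply rat_1| apply rat_opp; auto]. }
      assert (Rx : rational (/ x)).
      { replace (/x) with (((1 - y) / x - INR n + 1) + y / x + INR n + - 1) by (field; lra).
        apply rat_add; [apply rat_add; [apply rat_add|]|]; auto; try apply rat_INR.
        apply rat_opp, rat_1. }
      assert (Rx' : rational x).
      { rewrite <- (Rinv_inv x). apply rat_inv; auto. apply Rinv_neq_0_compat; lra. }
      split; auto. replace y with (y / x * x) by (field; lra). apply rat_mul; auto.
Qed.

Lemma Giter_good p : Good p -> forall k, Good (Giter k p).
Proof. intros H k. induction k; simpl; auto. apply Good_G; auto. Qed.

Lemma Giter_G k p : Giter k (G p) = Giter (S k) p.
Proof. induction k; simpl; auto. simpl in IHk. rewrite IHk. reflexivity. Qed.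

Lemma A_step p m : (1 <= m)%nat -> inA m p -> G p = (/ fst p - INR m, snd p / fst p).
Proof.
  destruct p as [x y]. unfold inA; cbn [fst snd]. intros Hm [H1 [H2 [H3 H4]]].
  assert (Hs : strip x = m) by (apply strip_unique; auto).
  assert (Hm1 := INR_pos1 _ Hm).
  assert (0 < /(INR m + 1)) by (apply Rinv_0_lt_compat; lra).
  rewrite G_A; [rewrite Hs; reflexivity | lra | rewrite Hs; lra].
Qed.

Lemma inA_facts m p : (1 <= m)%nat -> inA m p ->
  0 < fst p /\ fst p <= 1 /\ 0 <= snd p /\ snd p <= 1.
Proof.
  destruct p as [x y]. unfold inA; simpl. intros Hm [H1 [H2 [H3 H4]]].
  assert (Hm1 := INR_pos1 _ Hm).
  assert (0 < /(INR m + 1)) by (apply Rinv_0_lt_compat; lra).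
  assert (/ INR m <= 1) by (rewrite <- Rinv_1; apply Rinv_le_contravar; lra).
  repeat split; try lra. nra.
Qed.

Lemma half_pow n : (/2)^n * 2^n = 1.
Proof. induction n; simpl; [ring|]. replace (/ 2 * (/ 2) ^ n * (2 * 2 ^ n)) with ((/2 * 2) * ((/ 2) ^ n * 2 ^ n)) by ring.
  rewrite IHn. field. Qed.

Lemma allA_y0 v : (forall k, exists m, (1 <= m)%nat /\ inA m (Giter k v)) -> snd v = 0.
Proof.
  intros H.
  assert (step : forall k, 2 * snd (Giter k v) <= snd (Giter (S (S k)) v)).
  { intro k. destruct (H k) as [m [Hm HA]]. destruct (H (S k)) as [m' [Hm' HA']].
    simpl Giter in *. rewrite (A_step _ m Hm HA) in HA' |- *.
    rewrite (A_step _ m' Hm' HA').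
    destruct (inA_facts _ _ Hm' HA') as [F1 _]. simpl in F1 |- *.
    destruct (Giter k v) as [x y]. unfold inA in HA; simpl in *.
    destruct HA as [H1 [H2 [H3 H4]]].
    assert (Hm1 := INR_pos1 _ Hm).
    assert (Hx : 0 < x). { assert (0 < /(INR m + 1)) by (apply Rinv_0_lt_compat; lra). lra. }
    assert (Hu : x * / x = 1) by (field; lra).
    assert (K1 : 1 < (INR m + 1) * x).
    { apply (Rmult_lt_compat_l (INR m + 1)) in H1; [|lra].
      rewrite Rinv_r in H1; lra. }
    assert (K2 : INR m * x <= 1).
    { apply (Rmult_le_compat_l (INR m)) in H2; [|lra].
      rewrite Rinv_r in H2; lra. }
    set (w := / x - INR m) in *.
    assert (Pw : x * w = 1 - INR m * x) by (unfold w; field; lra).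
    assert (P2 : x * w <= / 2) by nra.
    assert (P0 : 0 < x * w) by nra.
    assert (I2 : 2 <= / (x * w)).
    { replace 2 with (/ / 2) by (rewrite Rinv_inv; reflexivity).
      apply Rinv_le_contravar; lra. }
    replace (y / x / w) with (y * / (x * w)) by (field; split; lra).
    nra. }
  assert (ind : forall j, 2 ^ j * snd v <= snd (Giter (2 * j) v)).
  { induction j.
    - simpl. lra.
    - replace (2 * S j)%nat with (S (S (2 * j))) by lia.
      specialize (step (2 * j)%nat). simpl pow. nra. }
  destruct (H 0%nat) as [m0 [Hm0 HA0]]. simpl in HA0.
  destruct (inA_facts _ _ Hm0 HA0) as [_ [_ [Y0 _]]].
  destruct (Req_dec (snd v) 0) as [E|E]; auto. exfalso.
  assert (Ypos : 0 < snd v) by lra.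
  destruct (pow_lt_1_zero (/2)) with (y := snd v) as [N HN]; auto.
  { rewrite Rabs_right; lra. }
  specialize (HN N (le_n N)).
  assert (Pp : 0 < (/2)^N) by (apply pow_lt; lra).
  rewrite Rabs_right in HN by lra.
  specialize (ind N). destruct (H (2 * N)%nat) as [m1 [Hm1 HA1]].
  destruct (inA_facts _ _ Hm1 HA1) as [_ [_ [_ Y1]]].
  assert (HP := half_pow N).
  assert (2 ^ N * snd v <= 1) by lra.
  assert (snd v = (/2)^N * (2^N * snd v)) by (rewrite <- Rmult_assoc, HP; ring).
  nra.
Qed.

Fixpoint cfg (n : nat) (a : nat -> nat) (t : R) : R :=
  match n with
  | O => t
  | S n' => / (INR (a O) + cfg n' (fun k => a (S k)) t)
  end.

Lemma cf_fin_cfg n : forall a, cf_fin n a = cfg n a 0.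
Proof. induction n; intros; simpl; auto. rewrite IHn. reflexivity. Qed.

Lemma cfg_range n : forall a t, (forall k, (1 <= a k)%nat) -> 0 <= t <= 1 -> 0 <= cfg n a t <= 1.
Proof.
  induction n; intros a t Ha Ht; simpl; auto.
  specialize (IHn (fun k => a (S k)) t (fun k => Ha (S k)) Ht).
  assert (H1 := INR_pos1 _ (Ha 0%nat)).
  split.
  - left. apply Rinv_0_lt_compat. lra.
  - rewrite <- Rinv_1. apply Rinv_le_contravar; lra.
Qed.

Lemma one_step A u v : 1 <= A -> 0 <= u -> 0 <= v -> Rabs (/ (A + u) - / (A + v)) <= Rabs (u - v).
Proof.
  intros HA Hu Hv.
  replace (/ (A + u) - / (A + v)) with ((v - u) * / ((A + u) * (A + v))) by (field; lra).
  rewrite (Rabs_minus_sym u v), Rabs_mult, (Rabs_right (/ _)).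
  2: { left. apply Rinv_0_lt_compat. nra. }
  assert (/ ((A + u) * (A + v)) <= 1).
  { rewrite <- Rinv_1. apply Rinv_le_contravar; nra. }
  assert (0 <= Rabs (v - u)) by apply Rabs_pos. nra.
Qed.

Lemma two_step A B u v : 1 <= A -> 1 <= B -> 0 <= u -> 0 <= v ->
  Rabs (/ (A + / (B + u)) - / (A + / (B + v))) <= / 4 * Rabs (u - v).
Proof.
  intros HA HB Hu Hv.
  assert (D1 : 2 <= A * (B + u) + 1) by nra.
  assert (D2 : 2 <= A * (B + v) + 1) by nra.
  assert (0 < / (B + u)) by (apply Rinv_0_lt_compat; lra).
  assert (0 < / (B + v)) by (apply Rinv_0_lt_compat; lra).
  replace (/ (A + / (B + u)) - / (A + / (B + v))) with
    ((u - v) * / ((A * (B + u) + 1) * (A * (B + v) + 1))) by (field; repeat split; lra).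
  rewrite Rabs_mult, (Rabs_right (/ _)).
  2: { left. apply Rinv_0_lt_compat. nra. }
  assert (/ ((A * (B + u) + 1) * (A * (B + v) + 1)) <= / 4).
  { apply Rinv_le_contravar; nra. }
  assert (0 <= Rabs (u - v)) by apply Rabs_pos. nra.
Qed.

Lemma contraction : forall n a s t, (forall k, (1 <= a k)%nat) -> 0 <= s <= 1 -> 0 <= t <= 1 ->
  Rabs (cfg n a s - cfg n a t) <= 2 * (/2)^n * Rabs (s - t).
Proof.
  assert (forall n, (forall a s t, (forall k, (1 <= a k)%nat) -> 0 <= s <= 1 -> 0 <= t <= 1 ->
    Rabs (cfg n a s - cfg n a t) <= 2 * (/2)^n * Rabs (s - t)) /\
    (forall a s t, (forall k, (1 <= a k)%nat) -> 0 <= s <= 1 -> 0 <= t <= 1 ->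
    Rabs (cfg (S n) a s - cfg (S n) a t) <= 2 * (/2)^(S n) * Rabs (s - t))).
  { induction n as [|n [IH1 IH2]].
    - split; intros a s t Ha Hs Ht.
      + simpl. assert (0 <= Rabs (s - t)) by apply Rabs_pos. lra.
      + simpl. replace (2 * (/ 2 * 1)) with 1 by field. rewrite Rmult_1_l.
        apply one_step; try lra. apply INR_pos1; auto.
    - split; auto.
      intros a s t Ha Hs Ht. simpl cfg.
      assert (R1 := cfg_range n (fun k => a (S (S k))) s (fun k => Ha (S (S k))) Hs).
      assert (R2 := cfg_range n (fun k => a (S (S k))) t (fun k => Ha (S (S k))) Ht).
      eapply Rle_trans.
      + apply two_step; try apply INR_pos1; auto; lra.
      + specialize (IH1 (fun k => a (S (S k))) s t (fun k => Ha (S (S k))) Hs Ht).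
        simpl pow. lra. }
  intros n. apply H.
Qed.

Lemma repr n : forall p a, (forall k, (1 <= a k)%nat /\ inA (a k) (Giter k p)) ->
  fst p = cfg n a (fst (Giter n p)).
Proof.
  induction n; intros p a H; simpl; auto.
  assert (IH := IHn (G p) (fun k => a (S k))).
  rewrite Giter_G in IH. simpl in IH. rewrite <- IH.
  2: { intro k. rewrite Giter_G. apply H. }
  destruct (H 0%nat) as [Hm HA]. simpl in HA.
  rewrite (A_step _ _ Hm HA). simpl.
  destruct (inA_facts _ _ Hm HA) as [Hx _].
  replace (INR (a 0%nat) + (/ fst p - INR (a 0%nat))) with (/ fst p) by ring.
  rewrite Rinv_inv. reflexivity.
Qed.

Theorem mainTheorem10 (x y : R) :
  inT (x, y) ->
  (~ rational x \/ ~ rational y) ->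
  (forall k : nat, Giter k (x, y) <> (0, 0)) /\
  (exists s : nat -> symbol, is_itinerary (x, y) s) /\
  (forall s : nat -> symbol, is_itinerary (x, y) s ->
     ((forall k : nat, is_A (s k)) <-> y = 0)) /\
  (forall a : nat -> nat,
     is_itinerary (x, y) (fun k => SymA (a k)) -> cf_value a x).
Proof.
  intros HT Hirr.
  assert (G0 : Good (x, y)).
  { split; auto. simpl. intros [A B]. destruct Hirr; auto. }
  assert (GK := Giter_good _ G0).
  split; [|split; [|split]].
  - intros k E. destruct (Good_pos _ (GK k)) as [P _]. rewrite E in P. simpl in P. lra.
  - exists (fun k => let p := Giter k (x, y) in
      if Rle_dec (snd p) (1 - INR (strip (fst p)) * fst p)
      then SymA (strip (fst p)) else SymB (strip (fst p))).
    intro k. cbv zeta.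
    assert (Gk := GK k). destruct (Good_pos _ Gk) as [P1 P2].
    destruct (Giter k (x, y)) as [u w]. destruct Gk as [[T1 [T2 T3]] _]. simpl in *.
    destruct (strip_spec u (conj P1 P2)) as [Hs [S1 [S2 [S3 S4]]]].
    destruct (Rle_dec w (1 - INR (strip u) * u)); simpl; split; auto.
    + unfold inA; simpl. repeat split; auto.
    + unfold inB; simpl. repeat split; auto. lra.
  - intros s Hs. split.
    + intro HA. apply (allA_y0 (x, y)). intro k.
      specialize (Hs k). specialize (HA k). destruct (s k); simpl in *; [|contradiction].
      exists n; auto.
    + intro Hy. subst y.
      assert (Y0 : forall k, snd (Giter k (x, 0)) = 0).
      { induction k; [reflexivity|].
        change (Giter (S k) (x,0)) with (G (Giter k (x,0))).
        assert (Gk := GK k). destruct (Good_pos _ Gk) as [P1 P2].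
        destruct (Giter k (x, 0)) as [u w]. cbn [fst snd] in *. subst w.
        destruct (strip_spec u (conj P1 P2)) as [Hs' [S1 [S2 [S3 S4]]]].
        assert (Hm1 := INR_pos1 _ Hs').
        assert (INR (strip u) * u <= 1).
        { apply (Rmult_le_compat_l (INR (strip u))) in S4; [|lra].
          rewrite Rinv_r in S4; lra. }
        rewrite G_A by lra. cbn [snd]. unfold Rdiv. ring. }
      intro k. specialize (Hs k). specialize (Y0 k).
      destruct (s k); simpl; auto. exfalso.
      destruct Hs as [Hm [B1 [B2 B3]]].
      destruct (Giter k (x, 0)) as [u w]. simpl in *. subst w.
      assert (Hm1 := INR_pos1 _ Hm).
      assert (INR n * u <= 1).
      { apply (Rmult_le_compat_l (INR n)) in B3; [|lra].
        rewrite Rinv_r in B3; lra. }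
      lra.
  - intros a Ha. unfold is_itinerary in Ha. simpl in Ha.
    intros eps Heps.
    destruct (pow_lt_1_zero (/2)) with (y := eps / 2) as [N HN].
    { rewrite Rabs_right; lra. } { lra. }
    exists N. intros n Hn. unfold R_dist.
    rewrite cf_fin_cfg. replace x with (fst (x, y)) at 1 by reflexivity. rewrite (repr n (x, y) a Ha). simpl fst.
    destruct (Ha n) as [Hm HA].
    destruct (inA_facts _ _ Hm HA) as [F1 [F2 _]].
    assert (Ha' : forall k, (1 <= a k)%nat) by (intro k; apply Ha).
    assert (C := contraction n a 0 (fst (Giter n (x, y))) Ha' ltac:(lra) ltac:(lra)).
    specialize (HN n Hn).
    assert (Pp : 0 < (/2)^n) by (apply pow_lt; lra).
    rewrite Rabs_right in HN by lra.
    replace (Rabs (0 - fst (Giter n (x, y)))) with (fst (Giter n (x, y))) in C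
      by (rewrite Rabs_left1; lra).
    nra.
Qed.
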